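(* Let $\phi : X \to Y$ be an open code between shift spaces. If $\phi$ is constant-to-one, then $\phi$ is bi-closing.
   Context: Shift spaces are closed shift-invariant subsets of $\mathcal{A}^{\mathbb{Z}}$; a code is a continuous shift-commuting map. Open: images of open sets are open. Constant-to-one: all fibers finite of cardinality independent of $y \in Y$. Bi-closing: never identifies two distinct left asymptotic points nor two distinct right asymptotic points, where $x,\bar x$ are left (right) asymptotic if $d(\sigma^{-n}x,\sigma^{-n}\bar x)\to0$ ($d(\sigma^{n}x,\sigma^{n}\bar x)\to0$), $d(x,\bar x)=2^{-k}$ with $k$ maximal such that $x_{[-k,k]}=\bar x_{[-k,k]}$. *)

(* Defs.v *)
From mathcomp Require Import all_boot.
From Stdlib Require Import ZArith List.
Open Scope Z_scope.

Definition seqA (A : Type) := Z -> A.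

Definition shift {A : Type} (x : seqA A) : seqA A := fun i => x (i + 1).
Definition shiftn {A : Type} (n : Z) (x : seqA A) : seqA A := fun i => x (i + n).

(* x_[-k,k] = y_[-k,k] ; with the metric d(x,y) = 2^{-k} (k maximal),
   d(x,y) <= 2^{-k} iff agree k x y *)
Definition agree {A : Type} (k : nat) (x y : seqA A) : Prop :=
  forall i : Z, Z.abs i <= Z.of_nat k -> x i = y i.

Definition closed_set {A : Type} (X : seqA A -> Prop) : Prop :=
  forall x, (forall k, exists y, X y /\ agree k x y) -> X x.

Definition rel_open {A : Type} (X U : seqA A -> Prop) : Prop :=
  forall x, U x -> exists k, forall y, X y -> agree k x y -> U y.

Definition shift_space (A : finType) (X : seqA A -> Prop) : Prop :=
  closed_set X /\ (forall x, X x <-> X (shift x)).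

Definition is_code {A B : finType} (X : seqA A -> Prop) (Y : seqA B -> Prop)
  (phi : seqA A -> seqA B) : Prop :=
  (forall x, X x -> Y (phi x)) /\
  (forall x, X x -> forall n, exists m, forall y, X y -> agree m x y ->
      agree n (phi x) (phi y)) /\
  (forall x, X x -> phi (shift x) = shift (phi x)).

Definition open_code {A B : finType} (X : seqA A -> Prop) (Y : seqA B -> Prop)
  (phi : seqA A -> seqA B) : Prop :=
  forall U, (forall x, U x -> X x) -> rel_open X U ->
    rel_open Y (fun y => exists x, U x /\ phi x = y).

Definition constant_to_one {A B : finType} (X : seqA A -> Prop)
  (Y : seqA B -> Prop) (phi : seqA A -> seqA B) : Prop :=
  exists c : nat, forall y, Y y ->
    exists s : list (seqA A), NoDup s /\ length s = c /\
      (forall x, In x s <-> (X x /\ phi x = y)).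

Definition left_asymptotic {A : Type} (x y : seqA A) : Prop :=
  forall k : nat, exists N : nat, forall n : nat, (N <= n)%nat ->
    agree k (shiftn (- Z.of_nat n) x) (shiftn (- Z.of_nat n) y).

Definition right_asymptotic {A : Type} (x y : seqA A) : Prop :=
  forall k : nat, exists N : nat, forall n : nat, (N <= n)%nat ->
    agree k (shiftn (Z.of_nat n) x) (shiftn (Z.of_nat n) y).

Definition bi_closing {A B : finType} (X : seqA A -> Prop)
  (phi : seqA A -> seqA B) : Prop :=
  (forall x x', X x -> X x' -> x <> x' -> left_asymptotic x x' -> phi x <> phi x') /\
  (forall x x', X x -> X x' -> x <> x' -> right_asymptotic x x' -> phi x <> phi x').

(* Main.v *)
Require Import Defs.
From mathcomp Require Import all_boot.
From Stdlib Require Import ZArith List Lia Classical IndefiniteDescription FunctionalExtensionality.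
From mathcomp Require Import zify.
Open Scope Z_scope.

Definition agree' {A : Type} (k : nat) (x y : seqA A) : Prop :=
  forall i : Z, Z.abs i < Z.of_nat k -> x i = y i.

Definition clP {A : Type} (s : nat -> seqA A) (k : nat) (z : seqA A) : Prop :=
  forall N, exists n, (N <= n)%nat /\ agree' k z (s n).

Lemma fin_bound {T : Type} (Q : nat -> T -> Prop)
  (Qm : forall k k' w, (k <= k')%nat -> Q k w -> Q k' w) :
  forall l : list T, (forall w, In w l -> exists k, Q k w) ->
  exists k, forall w, In w l -> Q k w.
Proof.
  induction l as [|a l IH]; intros H.
  - exists 0%nat. intros w [].
  - destruct (H a (in_eq a l)) as [k1 Hk1].
    destruct IH as [k2 Hk2]. { intros w Hw. apply H. now right. }
    exists (Nat.max k1 k2). intros w [<-|Hw].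
    + eapply Qm; [|exact Hk1]. lia.
    + eapply Qm; [|exact (Hk2 w Hw)]. lia.
Qed.

Lemma in_In {T : eqType} (x : T) (l : seq.seq T) : x \in l -> In x l.
Proof.
  elim: l => [|a l IH] //=. rewrite seq.in_cons => /orP [/eqP ->|H]; [now left|right; auto].
Qed.

Definition modz {A : Type} (k : nat) (z : seqA A) (p : A * A) : seqA A :=
  fun i => if Z.eqb i (Z.of_nat k) then p.2 else if Z.eqb i (- Z.of_nat k) then p.1 else z i.

Lemma cl_step {A : finType} (s : nat -> seqA A) k z :
  clP s k z -> exists z', agree' k z z' /\ clP s (S k) z'.
Proof.
  intros H. apply NNPP. intro Hn.
  assert (Hall : forall p : A * A, exists N, forall n, (N <= n)%nat ->
            ~ agree' (S k) (modz k z p) (s n)).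
  { intro p. apply NNPP. intro Hp. apply Hn. exists (modz k z p). split.
    - intros i Hi. unfold modz.
      destruct (Z.eqb_spec i (Z.of_nat k)); [lia|].
      destruct (Z.eqb_spec i (- Z.of_nat k)); [lia|]. reflexivity.
    - intro N. apply NNPP. intro HN. apply Hp. exists N. intros n Hn' Ha.
      apply HN. exists n. split; auto. }
  destruct (fin_bound (fun N p => forall n, (N <= n)%nat ->
            ~ agree' (S k) (modz k z p) (s n))) with (l := enum (predT : pred (A * A)))
    as [N HN].
  { intros k1 k2 w Hk Hw n Hn'. apply Hw. lia. }
  { intros w _. apply Hall. }
  destruct (H N) as [n [Hn1 Hn2]].
  apply (HN (s n (- Z.of_nat k), s n (Z.of_nat k)) ltac:(apply in_In; by rewrite mem_enum) n Hn1).
  intros i Hi. unfold modz. simpl.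
    destruct (Z.eqb_spec i (Z.of_nat k)); [subst; auto|].
    destruct (Z.eqb_spec i (- Z.of_nat k)); [subst; auto|].
    apply Hn2. lia.
Qed.

Section Cl.
Context {A : finType} (s : nat -> seqA A).

Definition cl_next (k : nat) (w : {z | clP s k z}) : {z | clP s (S k) z /\ agree' k (proj1_sig w) z} :=
  let e := constructive_indefinite_description _ (cl_step s k (proj1_sig w) (proj2_sig w)) in
  exist _ (proj1_sig e) (conj (proj2 (proj2_sig e)) (proj1 (proj2_sig e))).

Lemma cl_base : clP s 0 (s 0%nat).
Proof. intros N. exists N. split; [lia|]. intros i Hi. lia. Qed.

Fixpoint cl_g (k : nat) : {z | clP s k z} :=
  match k with
  | O => exist _ (s 0%nat) cl_base
  | S k' => let w := cl_next k' (cl_g k') in exist _ (proj1_sig w) (proj1 (proj2_sig w))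
  end.

Lemma agree'_trans k (x y z : seqA A) : agree' k x y -> agree' k y z -> agree' k x z.
Proof. intros H1 H2 i Hi. rewrite (H1 i Hi). now apply H2. Qed.

Lemma cl_g_agree k m : agree' k (proj1_sig (cl_g k)) (proj1_sig (cl_g (k + m))).
Proof.
  induction m as [|m IH].
  - rewrite addn0. intros i _. reflexivity.
  - eapply agree'_trans; [exact IH|].
    rewrite addnS. simpl.
    intros i Hi. apply (proj2 (proj2_sig (cl_next (k + m) (cl_g (k + m))))). lia.
Qed.

Lemma cluster : exists z, forall k, clP s k z.
Proof.
  exists (fun i => proj1_sig (cl_g (S (Z.to_nat (Z.abs i)))) i).
  intros k.
  assert (Hz : agree' k (fun i => proj1_sig (cl_g (S (Z.to_nat (Z.abs i)))) i) (proj1_sig (cl_g k))).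
  { intros i Hi. simpl.
    set (j := S (Z.to_nat (Z.abs i))).
    assert (Hk : k = (j + (k - j))%nat) by (unfold j; lia).
    pose proof (cl_g_agree j (k - j)) as Hg. rewrite <- Hk in Hg.
    apply Hg. unfold j. lia. }
  intros N. destruct (proj2_sig (cl_g k) N) as [n [Hn1 Hn2]].
  exists n. split; auto. eapply agree'_trans; eauto.
Qed.
End Cl.

Lemma agree_mono {A : Type} (k k' : nat) (x y : seqA A) :
  (k' <= k)%nat -> agree k x y -> agree k' x y.
Proof. intros Hk H i Hi. apply H. lia. Qed.

Lemma agree_sym {A : Type} k (x y : seqA A) : agree k x y -> agree k y x.
Proof. intros H i Hi. symmetry. now apply H. Qed.

Lemma agree_trans {A : Type} k (x y z : seqA A) :
  agree k x y -> agree k y z -> agree k x z.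
Proof. intros H1 H2 i Hi. rewrite (H1 i Hi). now apply H2. Qed.

Lemma neq_sep {A : Type} (a b : seqA A) : exists k, agree k a b -> a = b.
Proof.
  destruct (classic (a = b)) as [E|E].
  - exists 0%nat. auto.
  - assert (exists i, a i <> b i) as [i Hi].
    { apply NNPP. intro N. apply E. apply functional_extensionality.
      intro i. apply NNPP. intro N'. apply N. now exists i. }
    exists (Z.to_nat (Z.abs i)). intro Ha. exfalso. apply Hi. apply Ha. lia.
Qed.

Lemma separation {A : Type} (l : list (seqA A)) :
  exists m, forall w w', In w l -> In w' l -> agree m w w' -> w = w'.
Proof.
  induction l as [|a l IH].
  - exists 0%nat. intros w w' [].
  - destruct IH as [m1 Hm1].
    destruct (fin_bound (fun k w' => agree k a w' -> a = w')) with (l := l)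
      as [m2 Hm2].
    { intros k k' w Hk H1 H2. apply H1. eapply agree_mono; eauto. }
    { intros w _. apply neq_sep. }
    exists (Nat.max m1 m2). intros w w' [<-|Hw] [<-|Hw'] Ha; auto.
    + apply Hm2; auto. eapply agree_mono; [|exact Ha]. lia.
    + symmetry. apply Hm2; auto. apply agree_sym. eapply agree_mono; [|exact Ha]. lia.
    + apply Hm1; auto. eapply agree_mono; [|exact Ha]. lia.
Qed.

Lemma unif_sep (A B : finType) (X : seqA A -> Prop) (Y : seqA B -> Prop)
  (phi : seqA A -> seqA B) :
  shift_space A X -> shift_space B Y -> is_code X Y phi ->
  open_code X Y phi -> constant_to_one X Y phi ->
  exists K, forall a b, X a -> X b -> phi a = phi b -> agree K a b -> a = b.
Proof.
  intros [HXc HXs] [HYc HYs] [HXY [Hcont Hcomm]] Hopen [c Hc].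
  apply NNPP. intro Hn.
  assert (Hs : forall K : nat, exists p : seqA A * seqA A,
             X (fst p) /\ X (snd p) /\ phi (fst p) = phi (snd p) /\
             agree K (fst p) (snd p) /\ fst p <> snd p).
  { intro K. apply NNPP. intro HK. apply Hn. exists K. intros a b Ha Hb Hab Hag.
    apply NNPP. intro Hne. apply HK. exists (a, b). simpl. tauto. }
  set (sp := fun K => proj1_sig (constructive_indefinite_description _ (Hs K))).
  assert (Hsp : forall K, X (fst (sp K)) /\ X (snd (sp K)) /\ phi (fst (sp K)) = phi (snd (sp K)) /\
             agree K (fst (sp K)) (snd (sp K)) /\ fst (sp K) <> snd (sp K)).
  { intro K. exact (proj2_sig (constructive_indefinite_description _ (Hs K))). }
  destruct (cluster (fun K => fst (sp K))) as [z Hz].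
  assert (HXz : X z).
  { apply HXc. intro k. destruct (Hz (S k) 0%nat) as [n [_ Hn2]].
    exists (fst (sp n)). split; [apply Hsp|]. intros i Hi. apply Hn2. lia. }
  destruct (Hc (phi z) (HXY z HXz)) as [F [HFnd [HFl HFin]]].
  assert (HzF : In z F) by (apply HFin; auto).
  destruct (separation F) as [m Hm].
  destruct (in_split z F HzF) as [l1 [l2 HF]].
  destruct (fin_bound (fun k w => forall y', Y y' -> agree k (phi z) y' ->
      exists v, (X v /\ agree m w v) /\ phi v = y')) with (l := F) as [k1 Hk1].
  { intros k k' w Hkk H y' Hy' Ha. apply H; auto. eapply agree_mono; eauto. }
  { intros w Hw. apply HFin in Hw. destruct Hw as [HXw Hpw].
    destruct (Hopen (fun v => X v /\ agree m w v)) with (x := phi w) as [k Hk].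
    - tauto.
    - intros x [_ Hx]. exists m. intros y0 Hy0 Ha. split; auto. eapply agree_trans; eauto.
    - exists w. split; auto. split; auto. intros i _; reflexivity.
    - exists k. rewrite <- Hpw. exact Hk. }
  destruct (Hcont z HXz k1) as [m1 Hm1].
  destruct (Hz (S (Nat.max m m1)) m) as [n [Hnm Hna]].
  destruct (Hsp n) as [HXa [HXb [Hab [Hagab Hneab]]]].
  set (a := fst (sp n)) in *. set (b := snd (sp n)) in *.
  assert (Hza : agree (Nat.max m m1) z a) by (intros i Hi; apply Hna; lia).
  assert (Hzam : agree m z a) by (eapply agree_mono; [|exact Hza]; lia).
  assert (Hzbm : agree m z b).
  { eapply agree_trans; [exact Hzam|]. eapply agree_mono; [|exact Hagab]. lia. }
  assert (Hyy : agree k1 (phi z) (phi a)).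
  { apply Hm1; auto. eapply agree_mono; [|exact Hza]. lia. }
  destruct (Hc (phi a) (HXY a HXa)) as [L [HLnd [HLl HLin]]].
  assert (Hpick : forall w, exists v, In w F -> X v /\ agree m w v /\ phi v = phi a).
  { intro w. destruct (classic (In w F)) as [Hw|Hw].
    - destruct (Hk1 w Hw (phi a) (HXY a HXa) Hyy) as [v [[H1 H2] H3]].
      exists v. auto.
    - exists z. tauto. }
  set (pk := fun w => proj1_sig (constructive_indefinite_description _ (Hpick w))).
  assert (Hpk : forall w, In w F -> X (pk w) /\ agree m w (pk w) /\ phi (pk w) = phi a).
  { intros w Hw. exact (proj2_sig (constructive_indefinite_description _ (Hpick w)) Hw). }
  assert (Hl12F : forall w, In w (l1 ++ l2) -> In w F).
  { intros w Hw. rewrite HF. apply in_app_iff in Hw. apply in_app_iff. simpl. tauto. }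
  rewrite HF in HFnd.
  pose proof (NoDup_remove_1 _ _ _ HFnd) as Hnd12.
  pose proof (NoDup_remove_2 _ _ _ HFnd) as Hz12.
  assert (Hnotin : forall x, agree m z x -> ~ In x (List.map pk (l1 ++ l2))).
  { intros x Hx Hin. apply in_map_iff in Hin. destruct Hin as [w [Hw1 Hw2]].
    apply Hz12. replace z with w; auto.
    apply Hm; [apply Hl12F; exact Hw2|exact HzF|].
    eapply agree_trans; [apply (Hpk w (Hl12F w Hw2))|]. rewrite Hw1. now apply agree_sym. }
  assert (HM : NoDup (a :: b :: List.map pk (l1 ++ l2))).
  { constructor.
    - intros [E|E]; [now apply Hneab|]. exact (Hnotin a Hzam E).
    - constructor; [exact (Hnotin b Hzbm)|].
      apply NoDup_map_NoDup_ForallPairs; auto.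
      intros w w' Hw Hw' E.
      apply Hm; try apply Hl12F; auto.
      eapply agree_trans; [apply (Hpk w (Hl12F w Hw))|]. rewrite E.
      apply agree_sym. apply (Hpk w' (Hl12F w' Hw')). }
  assert (Hincl : incl (a :: b :: List.map pk (l1 ++ l2)) L).
  { intros x [<-|[<-|Hx]]; apply HLin; auto.
    apply in_map_iff in Hx. destruct Hx as [w [<- Hw]].
    destruct (Hpk w (Hl12F w Hw)) as [H1 [_ H3]]. auto. }
  pose proof (NoDup_incl_length HM Hincl) as Hlen.
  rewrite HLl in Hlen. rewrite <- HFl, HF in Hlen. simpl in Hlen.
  rewrite length_map !length_app in Hlen. simpl in Hlen. lia.
Qed.

Lemma shiftn_0 {A : Type} (x : seqA A) : shiftn 0 x = x.
Proof. apply functional_extensionality. intro i. unfold shiftn. f_equal. lia. Qed.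

Lemma shift_pos_X (A B : finType) (X : seqA A -> Prop) (Y : seqA B -> Prop)
  (phi : seqA A -> seqA B) :
  shift_space A X -> is_code X Y phi ->
  forall n x, X x -> X (shiftn (Z.of_nat n) x) /\ phi (shiftn (Z.of_nat n) x) = shiftn (Z.of_nat n) (phi x).
Proof.
  intros [_ HXs] [_ [_ Hcomm]]. induction n as [|n IH]; intros x Hx.
  - simpl. rewrite !shiftn_0. auto.
  - assert (E : forall (C : Type) (u : seqA C), shiftn (Z.of_nat (S n)) u = Defs.shift (shiftn (Z.of_nat n) u)).
    { intros C u. apply functional_extensionality. intro i. unfold shiftn, Defs.shift. f_equal. lia. }
    destruct (IH x Hx) as [H1 H2]. rewrite !E. split.
    + exact (proj1 (HXs _) H1).
    + rewrite Hcomm; auto. now rewrite H2.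
Qed.

Lemma shift_neg_X (A B : finType) (X : seqA A -> Prop) (Y : seqA B -> Prop)
  (phi : seqA A -> seqA B) :
  shift_space A X -> is_code X Y phi ->
  forall n x, X x -> X (shiftn (- Z.of_nat n) x) /\ phi (shiftn (- Z.of_nat n) x) = shiftn (- Z.of_nat n) (phi x).
Proof.
  intros [_ HXs] [_ [_ Hcomm]]. induction n as [|n IH]; intros x Hx.
  - simpl. rewrite !shiftn_0. auto.
  - assert (E : forall (C : Type) (u : seqA C), Defs.shift (shiftn (- Z.of_nat (S n)) u) = shiftn (- Z.of_nat n) u).
    { intros C u. apply functional_extensionality. intro i. unfold shiftn, Defs.shift. f_equal. lia. }
    destruct (IH x Hx) as [H1 H2].
    assert (HX : X (shiftn (- Z.of_nat (S n)) x)) by (apply HXs; now rewrite E).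
    split; auto.
    pose proof (Hcomm _ HX) as Hc. rewrite E H2 in Hc.
    apply functional_extensionality. intro i.
    pose proof (equal_f Hc (i - 1)) as Hi. unfold Defs.shift, shiftn in Hi |- *.
    replace (i - 1 + 1) with i in Hi by lia. rewrite <- Hi. f_equal. lia.
Qed.

Theorem proposition2p10 (A B : finType) (X : seqA A -> Prop) (Y : seqA B -> Prop)
  (phi : seqA A -> seqA B) :
  shift_space A X -> shift_space B Y -> is_code X Y phi ->
  open_code X Y phi -> constant_to_one X Y phi -> bi_closing X phi.
Proof.
  intros HX HY Hcode Hopen Hc.
  destruct (unif_sep A B X Y phi HX HY Hcode Hopen Hc) as [K HK].
  split; intros x x' Hx Hx' Hne Has Heq; destruct (Has K) as [N HN];
    specialize (HN N (leqnn N)).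
  - destruct (shift_neg_X A B X Y phi HX Hcode N x Hx) as [H1 H2].
    destruct (shift_neg_X A B X Y phi HX Hcode N x' Hx') as [H1' H2'].
    assert (E : shiftn (- Z.of_nat N) x = shiftn (- Z.of_nat N) x').
    { apply HK; auto. now rewrite H2 H2' Heq. }
    apply Hne. apply functional_extensionality. intro i.
    pose proof (equal_f E (i + Z.of_nat N)) as Hi. unfold shiftn in Hi.
    now replace (i + Z.of_nat N + - Z.of_nat N) with i in Hi by lia.
  - destruct (shift_pos_X A B X Y phi HX Hcode N x Hx) as [H1 H2].
    destruct (shift_pos_X A B X Y phi HX Hcode N x' Hx') as [H1' H2'].
    assert (E : shiftn (Z.of_nat N) x = shiftn (Z.of_nat N) x').
    { apply HK; auto. now rewrite H2 H2' Heq. }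
    apply Hne. apply functional_extensionality. intro i.
    pose proof (equal_f E (i - Z.of_nat N)) as Hi. unfold shiftn in Hi.
    now replace (i - Z.of_nat N + Z.of_nat N) with i in Hi by lia.
Qed.
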